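(* Let $n\ge2$, $x\in\{0,\dots,n-1\}$ and $k:=n+1+x$. Then \[g_n(x):=\mathbb P(I_n=1\mid X=x)=\min\Bigl\{1,\max\Bigl\{0,\frac{V_n(k)}{N(k,n)}\Bigr\}\Bigr\},\] and consequently $\mathbb P(I_n=1)=\sum_{x=0}^{n-1}\binom{n-1}{x}2^{-(n-1)}g_n(x)$.
   Context: Let $\mathcal X=\{A,B,C,D\}$ and let $(X_i)_{i\ge1}$ be the first-order Markov chain on $\mathcal X$ with $\mathbb P(X_1=x)=1/4$ for all $x$ and transitions: from $A$ to $A$ or $C$ w.p. $1/2$ each; from $B$ to $B$ or $D$ w.p. $1/2$ each; from $C$ and from $D$ to each of $A,B,C,D$ w.p. $1/4$. A nonempty string is admissible if all consecutive transitions have positive probability; $\mathcal A$ is the set of admissible nonempty strings; $K(u):=-\log_2\mathbb P(X_1^m=u)$ for $u=x_1^m\in\mathcal A$. $S_k:=\#\{u\in\mathcal A:K(u)=k\}$, $N(k,\ell):=\#\{u\in\mathcal A$ of length $\ell$ with $K(u)=k\}$, $W_{<n}(k):=\sum_{\ell=1}^{n-1}N(k,\ell)$, $V_n(k):=S_k/2-W_{<n}(k)$. Shortlex source code $C$: order nonempty binary strings by length then lexicographically as $b_1,b_2,\dots$; order $\mathcal A$ as $u_1,u_2,\dots$ by increasing $K$, then increasing length, then lexicographically with $A<B<C<D$; set $C(u_j):=b_j$. Let $K_n:=K(X_1^n)$, $L_n:=|C(X_1^n)|$, $I_n:=\mathbf 1\{L_n=K_n-1\}$, and $X:=\#\{i\in\{1,\dots,n-1\}:X_i\in\{C,D\}\}$.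 *)

(* Defs.v *)
(* All probabilities are exact rationals (they are dyadic). *)
From mathcomp Require Import all_boot all_order all_algebra.
Set Implicit Arguments. Unset Strict Implicit. Unset Printing Implicit Defensive.
Import Order.TTheory GRing.Theory Num.Theory.
Local Open Scope ring_scope.

(* Alphabet {A,B,C,D} encoded as 'I_4 with A=0, B=1, C=2, D=3;
   the lexicographic letter order A<B<C<D is the order on 'I_4. *)
Definition letter := 'I_4.
Definition isC_or_D (a : letter) : bool := (2 <= val a)%N.

Definition trans (a b : letter) : rat :=
  match val a with
  | 0%N => if (val b == 0%N) || (val b == 2%N) then 1 / 2 else 0
  | 1%N => if (val b == 1%N) || (val b == 3%N) then 1 / 2 else 0
  | _ => 1 / 4
  end.

Fixpoint pathprob (a : letter) (s : seq letter) : rat :=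
  match s with
  | [::] => 1
  | b :: s' => trans a b * pathprob b s'
  end.

Definition prob (u : seq letter) : rat :=
  match u with
  | [::] => 0
  | a :: s => (1 / 4) * pathprob a s
  end.

Definition admissible (u : seq letter) : bool :=
  match u with
  | [::] => false
  | a :: s => path (fun x y => 0 < trans x y) a s
  end.

(* K(u) = -log2 P(u).  Statements "K(u) = k" are expressed exactly as P(u) = 2^-k,
   and K(v) < K(u) as P(v) > P(u). *)
Definition Kis (u : seq letter) (k : nat) : bool := prob u == (2 ^+ k)^-1.

Definition Ncount (k l : nat) : nat :=
  #|[set v : l.-tuple letter | admissible v && Kis v k]|.

(* S_k = #{u in A : K(u) = k}; every admissible u has K(u) >= |u| + 1,
   so only lengths l <= k contribute (l = 0 contributes 0). *)
Definition Scount (k : nat) : nat := \sum_(l < k.+1) Ncount k l.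

Definition Wlt (n k : nat) : nat := \sum_(1 <= l < n) Ncount k l.

Definition Vn (n k : nat) : rat := (Scount k)%:R / 2 - (Wlt n k)%:R.

Fixpoint lexlt (s t : seq letter) : bool :=
  match s, t with
  | a :: s', b :: t' => ((val a) < (val b))%N || ((a == b) && lexlt s' t')
  | _, _ => false
  end.

Definition precedes (v u : seq letter) : bool :=
  (prob u < prob v)
  || ((prob v == prob u)
      && (((size v < size u)%N) || ((size v == size u) && lexlt v u))).

(* Index j (1-based) of an admissible u in the ordering u_1, u_2, ... of A.
   If v precedes u then P(v) >= P(u) >= 4^-|u|, while P(v) <= 2^-(|v|+1),
   hence |v| < 2|u|; so counting over lengths l <= 2|u| counts all predecessors. *)
Definition rank (u : seq letter) : nat :=
  (\sum_(l < (2 * size u).+1)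
     #|[set v : l.-tuple letter | admissible v && precedes v u]|).+1.

(* b_j: the j-th nonempty binary string in shortlex order (0 < 1):
   the binary expansion of j+1 with its leading 1 removed. *)
Definition bin_code (j : nat) : seq bool :=
  let m := trunc_log 2 j.+1 in
  [seq odd (j.+1 %/ 2 ^ (m.-1 - i)) | i <- iota 0 m].

Definition code (u : seq letter) : seq bool := bin_code (rank u).
Definition codelen (u : seq letter) : nat := size (code u).

(* I = 1{L = K - 1}, i.e. K = L + 1, i.e. P(u) = 2^-(L+1). *)
Definition Iev (u : seq letter) : bool := Kis u (codelen u).+1.

Definition Xcnt (u : seq letter) : nat := count isC_or_D (take (size u).-1 u).

Definition chainP (n : nat) (E : pred (n.-tuple letter)) : rat :=
  \sum_(u : n.-tuple letter | E u) prob u.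
Arguments chainP n E : clear implicits.

Definition condP (n : nat) (E F : pred (n.-tuple letter)) : rat :=
  chainP n (fun u => E u && F u) / chainP n F.
Arguments condP n E F : clear implicits.

Definition g (n x : nat) : rat :=
  condP n (fun u => Iev u) (fun u => Xcnt u == x).

(* Main.v *)
Require Import Defs.
From mathcomp Require Import all_boot all_order all_algebra.
From mathcomp Require Import zify ring lra.
Import Order.TTheory GRing.Theory Num.Theory.
Set Implicit Arguments. Unset Strict Implicit. Unset Printing Implicit Defensive.
Local Open Scope ring_scope.

Local Open Scope ring_scope.

Definition R (a b : letter) : bool := 0 < trans a b.
Definition dd (a : letter) : nat := if isC_or_D a then 2 else 1.

Lemma trans_eq a b : trans a b = if R a b then (2 ^+ dd a)^-1 else 0.
Proof.
case: a => [[|[|[|[|?]]]] ?] //; case: b => [[|[|[|[|?]]]] ?] //; vm_compute; reflexivity.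
Qed.

Definition ex (a : letter) (s : seq letter) : nat := (size s + count isC_or_D (belast a s))%N.

Lemma pathprobE a s : pathprob a s = if path R a s then (2 ^+ ex a s)^-1 else 0.
Proof.
elim: s a => [|b s IH] a /=; first by rewrite /ex /= expr0 invr1.
rewrite IH trans_eq; case: (R a b); case: (path R b s) => /=; rewrite ?mulr0 ?mul0r //.
rewrite -invfM -exprD /ex /= /dd; congr (_ ^+ _)^-1.
case: (isC_or_D a) => /=; lia.
Qed.

Local Open Scope nat_scope.

Lemma card_setsum (T : finType) (P : pred T) : #|[set v | P v]| = \sum_(v : T) P v.
Proof.
rewrite -sum1_card big_mkcond /=; apply: eq_bigr => v _; rewrite inE; by case: (P v).
Qed.

Lemma sum_tuple_cons m (F : m.+1.-tuple letter -> nat) :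
  \sum_(v : m.+1.-tuple letter) F v =
  \sum_(a : letter) \sum_(s : m.-tuple letter) F [tuple of a :: s].
Proof.
rewrite pair_big /=.
rewrite (reindex (fun p : letter * m.-tuple letter => [tuple of p.1 :: p.2])) //=.
exists (fun v : m.+1.-tuple letter => (thead v, [tuple of behead v])).
  by move=> [a s] _ /=; rewrite theadE; congr pair; apply: val_inj.
by move=> v _ /=; rewrite [in RHS](tuple_eta v).
Qed.

Lemma sum_tuple0 (F : 0.-tuple letter -> nat) : \sum_(v : 0.-tuple letter) F v = F [tuple].
Proof.
rewrite (big_pred1 [tuple]) // => v; rewrite /= [v]tuple0. by apply/esym/eqP.
Qed.

Local Open Scope nat_scope.

Definition Rb (a b : letter) : bool :=
  match val a with
  | 0 => (val b == 0) || (val b == 2)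
  | 1 => (val b == 1) || (val b == 3)
  | _ => true end.

Lemma RE a b : R a b = Rb a b.
Proof.
case: a => [[|[|[|[|?]]]] ?] //; case: b => [[|[|[|[|?]]]] ?] //; vm_compute; reflexivity.
Qed.

Lemma ex_cons a b s : ex a (b :: s) = dd a + ex b s.
Proof. rewrite /ex /dd /=; case: (isC_or_D a) => /=; lia. Qed.

Definition hcp (a : letter) m e := \sum_(s : m.-tuple letter) (path R a s && (ex a s == e)).

Fixpoint U m e := match m with
  | 0 => if e is 0 then 2 else 0
  | m'.+1 => match e with 0 => 0 | 1 => U m' 0 | e'.+2 => U m' e'.+1 + 2 * U m' e' end end.

Definition V (a : letter) m e := match m with
  | 0 => nat_of_bool (e == 0)
  | m'.+1 => if isC_or_D a then (match e with e'.+2 => 2 * U m' e' | _ => 0 end)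
            else (match e with e'.+1 => U m' e' | _ => 0 end) end.

Lemma addn_eq_split d x e : (d + x == e) = (d <= e) && (x == e - d).
Proof. apply/eqP/andP => [<-|[h /eqP->]]; [by rewrite leq_addr addKn | by rewrite subnKC]. Qed.

Lemma hcpE m a e : hcp a m e = V a m e.
Proof.
elim: m a e => [|m IH] a e.
  by rewrite /hcp sum_tuple0 /= /ex /= eq_sym.
rewrite /hcp sum_tuple_cons.
rewrite (eq_bigr (fun b => (R a b && (dd a <= e)) * V b m (e - dd a))); last first.
  move=> b _; rewrite -IH /hcp.
  rewrite /=; case: (R a b) => /=; [|by rewrite mul0n big1].
  case: (leqP (dd a) e) => h /=; last first.
    rewrite mul0n big1 // => s _; rewrite ex_cons addn_eq_split leqNgt h /=; by case: path.
  rewrite mul1n; apply: eq_bigr => s _; by rewrite ex_cons addn_eq_split h.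
rewrite !big_ord_recl big_ord0 !RE /dd.
case: a => [[|[|[|[|?]]]] ?] //=; case: m {IH} => [|m] /=; case: e => [|[|[|e]]] //=; rewrite ?subSS ?subn0 /=; try lia; case: e => [|e] /=; lia.
Qed.

Local Open Scope ring_scope.

Lemma pow2_eq (i j : nat) : (((2:rat) ^+ i)^-1 == (2 ^+ j)^-1) = (i == j).
Proof.
rewrite (can_eq (@invrK _)) -!natrX eqr_nat eqn_exp2l //.
Qed.

Lemma pow2_lt (i j : nat) : (((2:rat) ^+ i)^-1 < (2 ^+ j)^-1) = (j < i)%N.
Proof.
rewrite ltf_pV2 ?exprn_gt0 // ?ltr_eXn2l //; apply/exprn_gt0 => //.
Qed.

Lemma pow2_neq0 (j : nat) : ((2:rat) ^+ j)^-1 != 0.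
Proof. by rewrite invr_eq0 expf_neq0. Qed.

Lemma probE a s : prob (a :: s) = if path R a s then (2 ^+ (ex a s + 2))^-1 else 0.
Proof.
rewrite /prob pathprobE; case: path; rewrite ?mulr0 //.
rewrite exprD invfM mulrC; congr (_ * _); by vm_compute.
Qed.

Lemma Kis_cons a s k : admissible (a :: s) && Kis (a :: s) k = path R a s && (ex a s + 2 == k)%N.
Proof.
rewrite /Kis probE /admissible -/R; case: path => //=; exact: pow2_eq.
Qed.

Local Open Scope nat_scope.

Lemma US m e : U m.+1 e = (if 0 < e then U m e.-1 else 0) + (if 1 < e then 2 * U m e.-2 else 0).
Proof. by case: e => [|[|e]] //=; rewrite addn0. Qed.

Lemma U_lt m e : e < m -> U m e = 0.
Proof.
elim: m e => [|m IH] e h; first by []; rewrite US.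
case: ifP => h1; case: ifP => h2; rewrite ?IH //; lia.
Qed.

Lemma U_closed m x : U m (m + x) = 2 ^ x.+1 * 'C(m, x).
Proof.
elim: m x => [|m IH] x; first by rewrite add0n; case: x => [|x] //=; rewrite muln0.
rewrite US addSn /= IH.
case: x => [|x].
  rewrite addn0 bin0; case: m {IH} => [|m]; first by [].
  by rewrite U_lt.
rewrite addnS /= IH binS expnS; ring.
Qed.

Definition H e := \sum_(m < e.+1) U m e.

Lemma H_rec e : H e.+2 = H e.+1 + 2 * H e.
Proof.
rewrite /H big_ord_recl /= add0n.
rewrite (eq_bigr (fun m : 'I_e.+2 => U m e.+1 + 2 * U m e)) // big_split /=.
congr (_ + _); rewrite -big_distrr /=; congr (_ * _).
by rewrite big_ord_recr (@U_lt e.+1 e) //= addn0.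
Qed.

Lemma H_sum e : H e + H e.+1 = 2 ^ e.+2.
Proof.
elim: e => [|e IH]; first by rewrite /H !big_ord_recr !big_ord0 /=.
rewrite (H_rec e) expnS -IH; lia.
Qed.

Local Open Scope nat_scope.

Lemma Ncount_sum k l : Ncount k l = \sum_(v : l.-tuple letter) (admissible v && Kis v k).
Proof. by rewrite /Ncount card_setsum. Qed.

Lemma Ncount0 k : Ncount k 0 = 0.
Proof. by rewrite Ncount_sum sum_tuple0. Qed.

Lemma sumV m e : \sum_(a : letter) V a m e = 2 * U m e.
Proof.
rewrite !big_ord_recl big_ord0 /=.
case: m => [|m] /=; first by case: e.
case: e => [|[|e]] //=; lia.
Qed.

Lemma NcountS k m : Ncount k m.+1 = (1 < k) * (2 * U m (k - 2)).
Proof.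
rewrite Ncount_sum sum_tuple_cons.
rewrite (eq_bigr (fun a => (1 < k) * V a m (k - 2))); last first.
  move=> a _; rewrite -hcpE /hcp.
  case: (ltnP 1 k) => hk.
    rewrite mul1n; apply: eq_bigr => s _ /=; rewrite Kis_cons.
    congr (_ && _); apply/eqP/eqP; lia.
  rewrite mul0n big1 // => s _ /=; rewrite Kis_cons.
  by case: path => //=; case: eqP => //; lia.
case: (ltnP 1 k) => hk /=.
  rewrite mul1n -sumV; apply: eq_bigr => i _; exact: mul1n.
by rewrite big1 // => i _; rewrite mul0n.
Qed.

Lemma Ncount_big k l : k <= l -> Ncount k l = 0.
Proof.
case: l => [|m] h; first by rewrite Ncount0.
rewrite NcountS; case: (ltnP 1 k) => hk //=; rewrite U_lt ?muln0 //; lia.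
Qed.

Lemma ScountE k : Scount k = (1 < k) * (2 * H (k - 2)).
Proof.
rewrite /Scount big_ord_recl Ncount0 add0n.
rewrite (eq_bigr (fun m : 'I_k => (1 < k) * (2 * U m (k - 2)))); last by move=> i _; rewrite NcountS.
case: (ltnP 1 k) => hk /=; last by rewrite big1 // => i _; rewrite mul0n.
rewrite mul1n (eq_bigr (fun m : 'I_k => 2 * U m (k - 2))); last by move=> i _; rewrite mul1n.
rewrite -big_distrr /=; congr (_ * _).
case: k hk => [|[|e]] // _; rewrite /H /= subn2 /=.
by rewrite big_ord_recr (@U_lt e.+1 e) //= addn0.
Qed.

Lemma T_id k : 2 <= k -> \sum_(k' < k) Scount k' + H (k - 2) + 2 = 2 ^ k.
Proof.
elim: k => [|k IH] //; case: k IH => [|[|k]] IH _ //.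
  by rewrite !big_ord_recr big_ord0 !ScountE /H !big_ord_recr big_ord0.
rewrite big_ord_recr /= ScountE /=.
have := IH isT; rewrite !subn2 /= => hI.
have := H_sum k => hs; rewrite expnS; lia.
Qed.

Local Open Scope nat_scope.

Lemma adm_prob v : admissible v -> exists j, prob v = (((2:rat) ^+ j)^-1)%R.
Proof. case: v => [|a s] // h; have h' : path R a s := h; exists (ex a s + 2); by rewrite probE h'. Qed.

Lemma notadm_prob v : ~~ admissible v -> prob v = 0%R.
Proof. case: v => [|a s] // h; have h' : path R a s = false := negbTE h; by rewrite probE h'. Qed.

Lemma sum_eq_ord k (j : nat) : \sum_(i < k) (j == i :> nat) = (j < k).
Proof.
elim: k => [|k IH]; first by rewrite big_ord0.
rewrite big_ord_recr /= IH ltnS; case: (ltngtP j k) => h; reflexivity.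
Qed.

Lemma prec_split (l n k : nat) (u v : seq letter) : prob u = (((2:rat) ^+ k)^-1)%R -> size v = l -> size u = n ->
  (admissible v && precedes v u : nat) = \sum_(k' < k) (admissible v && Kis v k')
     + (admissible v && Kis v k && (l < n)) + (admissible v && Kis v k && (l == n) && lexlt v u).
Proof.
move=> hu hv hun; case: (boolP (admissible v)) => ha /=; last by rewrite big1.
have [j hj] := adm_prob ha.
have -> : \sum_(k' < k) Kis v k' = \sum_(i < k) (j == i :> nat).
  by apply: eq_bigr => i _; rewrite /Kis hj pow2_eq.
rewrite sum_eq_ord /precedes /Kis hu hj pow2_lt !pow2_eq hv hun.
case: (ltngtP j k) => //= _; rewrite ?addn0 //=.
by case: ltngtP.
Qed.

Definition lexc n k (u : seq letter) :=
  \sum_(v : n.-tuple letter) (admissible v && Kis v k && lexlt v u).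

Lemma sum_N_widen k M : k < M -> \sum_(l < M) Ncount k l = Scount k.
Proof.
move=> h; rewrite /Scount (big_ord_widen (n1:=k.+1) M (Ncount k) h).
apply: esym; rewrite big_mkcond /=.
apply: eq_bigr => i _; case: ifP => // /negbT; rewrite -leqNgt => hi.
by rewrite Ncount_big // ltnW.
Qed.

Lemma sum_N_lt n k M : 0 < n -> n <= M -> \sum_(l < M) (l < n) * Ncount k l = Wlt n k.
Proof.
move=> h0 h.
have -> : Wlt n k = \sum_(l < n) Ncount k l.
  by rewrite /Wlt -(big_mkord xpredT) (@big_ltn _ _ _ 0 n) // Ncount0.
rewrite (big_ord_widen (n1:=n) M (Ncount k) h); apply: esym; rewrite big_mkcond /=.
apply: eq_bigr => i _; by case: (i < n); rewrite ?mul1n ?mul0n.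
Qed.

Lemma rankE n (u : n.-tuple letter) k : 0 < n -> k <= 2 * n -> prob u = (((2:rat) ^+ k)^-1)%R ->
  rank u = (\sum_(k' < k) Scount k' + Wlt n k + lexc n k u).+1.
Proof.
move=> hn hk hu; rewrite /rank size_tuple; congr S.
rewrite (eq_bigr (fun l : 'I_(2 * n).+1 => \sum_(k' < k) Ncount k' l + (l < n) * Ncount k l
   + (l == n :> nat) * \sum_(v : l.-tuple letter) (admissible v && Kis v k && lexlt v u))); last first.
  move=> l _; rewrite card_setsum.
  rewrite (eq_bigr _ (fun (v : l.-tuple letter) _ => prec_split (l:=l) (v:=v) hu (size_tuple v) (size_tuple u))).
  rewrite !big_split /=; congr (_ + _ + _).
  - rewrite exchange_big /=; apply: eq_bigr => k' _; by rewrite Ncount_sum.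
  - rewrite Ncount_sum; case: (l < n); rewrite ?mul1n ?mul0n; last by rewrite big1 // => v; rewrite andbF.
    by apply: eq_bigr => v _; rewrite andbT.
  - case: (l == n :> nat); rewrite ?mul1n ?mul0n; last by rewrite big1 // => v; rewrite andbF.
    by apply: eq_bigr => v _; rewrite andbT.
rewrite !big_split /=; congr (_ + _ + _).
- rewrite exchange_big /=; apply: eq_bigr => k' _; apply: sum_N_widen; have := ltn_ord k'; lia.
- rewrite (sum_N_lt k hn) //; lia.
- have hn2 : n < (2 * n).+1 by lia.
  rewrite (bigD1 (Ordinal hn2)) //= eqxx mul1n [X in _ + X = _]big1 ?addn0 // => l hl.
  suff -> : (l == n :> nat) = false by rewrite mul0n.
  apply/negbTE; apply: contra hl => /eqP h; apply/eqP; exact: val_inj.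
Qed.

Local Open Scope nat_scope.

Section RankCount.
Variables (T : finType) (B : pred T) (r : rel T).
Hypothesis irr : forall x, ~~ r x x.
Hypothesis tr : transitive r.
Hypothesis tot : forall x y, x != y -> r x y || r y x.

Let S u := [set v | B v && r v u].
Let rk u := #|S u|.

Lemma rk_lt u w : B u -> r u w -> rk u < rk w.
Proof.
move=> Bu ruw; apply: proper_card; apply/properP; split.
  apply/subsetP => v; rewrite !inE => /andP[-> rvu] /=; exact: tr rvu ruw.
exists u; rewrite !inE ?Bu ?ruw ?irr //.
Qed.

Lemma rk_inj : {in B &, injective rk}.
Proof.
move=> u w Bu Bw e; apply/eqP; apply/negPn/negP => ne.
case/orP: (tot ne) => h.
  by have := rk_lt Bu h; rewrite e ltnn.
by have := rk_lt Bw h; rewrite e ltnn.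
Qed.

Lemma rk_bound u : B u -> rk u < #|B|.
Proof.
move=> Bu; rewrite -cardsE; apply: proper_card; apply/properP; split.
  by apply/subsetP => v; rewrite !inE => /andP[].
by exists u; rewrite !inE ?Bu // (negbTE (irr u)) andbF.
Qed.

Lemma sum_lt_min c N : \sum_(0 <= i < N) (i < c) = minn c N.
Proof.
elim: N => [|N IH]; first by rewrite big_geq // minn0.
rewrite big_nat_recr //= IH; case: (ltnP N c) => h; rewrite /=; lia.
Qed.

Lemma rank_count c : \sum_(u : T) (B u && (rk u < c)) = minn c #|B|.
Proof.
have -> : \sum_(u : T) (B u && (rk u < c)) = \sum_(u <- enum B) (rk u < c).
  rewrite big_enum /=; apply: esym; rewrite big_mkcond /=.
  apply: eq_bigr => u _; by rewrite unfold_in; case: (B u).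
have -> : \sum_(u <- enum B) (rk u < c) = \sum_(i <- map rk (enum B)) (i < c) by rewrite big_map.
have hu : uniq (map rk (enum B)).
  rewrite map_inj_in_uniq ?enum_uniq // => u w; rewrite !mem_enum; exact: rk_inj.
have hs : {subset map rk (enum B) <= iota 0 #|B|}.
  move=> i /mapP[u]; rewrite mem_enum => Bu ->; rewrite mem_iota /=; exact: rk_bound.
have hz : size (iota 0 #|B|) <= size (map rk (enum B)) by rewrite size_map size_iota -cardE.
have [hsz hm] := uniq_min_size hu hs hz.
rewrite (perm_big _ (uniq_perm hu (iota_uniq 0 #|B|) hm)) /=.
by rewrite -sum_lt_min /index_iota subn0.
Qed.
End RankCount.

Local Open Scope nat_scope.

Lemma lexlt_irr s : ~~ lexlt s s.
Proof. by elim: s => [|a s IH] //=; rewrite ltnn eqxx. Qed.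

Lemma lexlt_trans : transitive lexlt.
Proof.
move=> t s w; elim: s t w => [|a s IH] [|b t] [|c w] //=.
case/orP=> [h1|/andP[/eqP <- h1]]; case/orP=> [h2|/andP[/eqP e h2]].
- by rewrite (ltn_trans h1 h2).
- by rewrite -e h1.
- by rewrite h2.
- by rewrite e eqxx (IH _ _ h1 h2) orbT.
Qed.

Lemma lexlt_tot s t : size s = size t -> s != t -> lexlt s t || lexlt t s.
Proof.
elim: s t => [|a s IH] [|b t] //= [e] ne.
case: (ltngtP (nat_of_ord a) (nat_of_ord b)) => h; rewrite ?orbT //=.
have ab : a = b by apply: val_inj.
rewrite -ab in ne *; rewrite eqxx /=; apply: IH => //.
by apply: contra ne => /eqP ->.
Qed.

Lemma codelenE u : codelen u = trunc_log 2 (rank u).+1.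
Proof. by rewrite /codelen /code /bin_code size_map size_iota. Qed.

Lemma Iev_block n k (u : n.-tuple letter) : 0 < n -> 3 <= k -> k <= 2 * n ->
  prob u = (((2:rat) ^+ k)^-1)%R -> Iev u = (Wlt n k + lexc n k u < H (k - 2)).
Proof.
move=> hn hk3 hk hu.
rewrite /Iev /Kis hu pow2_eq codelenE (rankE hn hk hu).
have hT := T_id (ltnW hk3).
case: k hk3 hk hu hT => [|[|[|k]]] // _ _ _ hT.
have hH := H_sum k.
rewrite subn2 /= in hT *.
have e3 : 2 ^ k.+3 = 2 * 2 ^ k.+2 by rewrite expnS.
set T := \sum_(k' < k.+3) Scount k' in hT *.
set W := Wlt n k.+3; set L := lexc n k.+3 u.
case: (ltnP (W + L) (H k.+1)) => h.
  rewrite (@trunc_log_eq 2 k.+2) ?eqxx //; apply/andP; split; lia.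
have : k.+3 <= trunc_log 2 (T + W + L).+2 by apply: trunc_log_max => //; lia.
move=> h2; apply/negbTE; apply/eqP; lia.
Qed.

Local Open Scope nat_scope.

Lemma block_count n k : 0 < n -> 3 <= k -> k <= 2 * n ->
  \sum_(u : n.-tuple letter) (admissible u && Kis u k && Iev u) = minn (H (k - 2) - Wlt n k) (Ncount k n).
Proof.
move=> hn hk3 hk.
pose B := fun v : n.-tuple letter => admissible v && Kis v k.
pose r := fun v u : n.-tuple letter => lexlt v u.
have irr : forall x, ~~ r x x by move=> x; exact: lexlt_irr.
have tr : transitive r by move=> x y z; exact: lexlt_trans.
have tot : forall x y, x != y -> r x y || r y x.
  move=> x y ne; apply: lexlt_tot; first by rewrite !size_tuple.
  by apply: contra ne => /eqP h; apply/eqP; apply: val_inj.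
have hcnt := rank_count B irr tr tot (H (k - 2) - Wlt n k).
have -> : Ncount k n = #|B|.
  by rewrite /Ncount; apply: eq_card => v; rewrite inE.
rewrite -hcnt; apply: eq_bigr => u _.
rewrite /B; case: (boolP (admissible u && Kis u k)) => //= /andP[ha /eqP hu].
rewrite (Iev_block hn hk3 hk hu) ltn_subRL addnC /lexc.
by rewrite addnC card_setsum.
Qed.

Local Open Scope ring_scope.

Lemma belast_take (a : letter) s : belast a s = take (size s) (a :: s).
Proof. by elim: s a => [|b s IH] a //=; rewrite IH. Qed.

Lemma Xcnt_Kis n x (u : n.-tuple letter) : (0 < n)%N -> admissible u ->
  (Xcnt u == x) = Kis u (n + 1 + x).
Proof.
case: u => [[|a s] /= /eqP hs] // hn ha.
have hp : path R a s := ha.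
rewrite /Kis probE hp pow2_eq /Xcnt /= -belast_take /ex.
rewrite -hs /=; apply/eqP/eqP; lia.
Qed.

Lemma Xcnt_lt n (u : n.-tuple letter) : (0 < n)%N -> (Xcnt u < n)%N.
Proof.
move=> hn; rewrite /Xcnt; apply: (leq_ltn_trans (count_size _ _)).
rewrite size_take size_tuple; case: n hn u => [|n] //= _ u.
by rewrite ltnS geq_minl.
Qed.

Lemma chainE n x (E : pred (n.-tuple letter)) : (0 < n)%N ->
  chainP n (fun u => E u && (Xcnt u == x)) =
  ((\sum_(u : n.-tuple letter) (admissible u && Kis u (n + 1 + x) && E u))%N)%:R * ((2 ^+ (n + 1 + x))^-1).
Proof.
move=> hn; rewrite /chainP big_mkcond natr_sum mulr_suml /=.
apply: eq_bigr => u _.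
case: (boolP (admissible u)) => ha /=; last first.
  by rewrite notadm_prob // mul0r; case: ifP.
rewrite (Xcnt_Kis x hn ha).
case hK: (Kis u (n + 1 + x)); last by rewrite andbF /= mul0r; case: (E u).
rewrite andbT /=; move: hK; rewrite /Kis => /eqP ->; case: (E u); by rewrite ?mul1r ?mul0r.
Qed.

Lemma chainX n x : (0 < n)%N ->
  chainP n (fun u => Xcnt u == x) = (Ncount (n + 1 + x) n)%:R * ((2 ^+ (n + 1 + x))^-1).
Proof.
move=> hn; rewrite (chainE x (fun _ => true) hn) Ncount_sum.
by congr (_%:R * _); apply: eq_bigr => u _; rewrite andbT.
Qed.

Lemma clip (h w N : nat) : (0 < N)%N ->
  ((minn (h - w) N)%:R / N%:R : rat) = Num.min 1 (Num.max 0 ((h%:R - w%:R) / N%:R)).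
Proof.
move=> hN.
have hN' : (0 : rat) < N%:R by rewrite ltr0n.
case: (leqP h w) => hw.
  have -> : (h - w = 0)%N by apply/eqP; rewrite subn_eq0.
  rewrite min0n mul0r max_l ?min_r //.
  rewrite ler_pdivrMr // mul0r subr_le0 ler_nat //.
rewrite -natrB ?(ltnW hw) //.
rewrite max_r; last by rewrite divr_ge0 // ler0n.
case: (leqP (h - w) N) => hm.
  by rewrite min_r // ler_pdivrMr // mul1r ler_nat.
rewrite divff ?lt0r_neq0 // min_l // ler_pdivlMr // mul1r ler_nat ltnW //.
Qed.

Local Open Scope ring_scope.

Lemma VnE n k : (1 < k)%N -> Vn n k = (H (k - 2))%:R - (Wlt n k)%:R.
Proof.
move=> hk; rewrite /Vn ScountE hk mul1n natrM; congr (_ - _).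
by rewrite mulrC mulKf.
Qed.

Lemma NcountE n x : (0 < n)%N -> Ncount (n + 1 + x) n = (2 ^ (x + 2) * 'C(n.-1, x))%N.
Proof.
case: n => [|m] // _; rewrite NcountS.
have -> : (m.+1 + 1 + x - 2 = m + x)%N by lia.
rewrite U_closed (_ : (1 < m.+1 + 1 + x)%N); last by lia.
rewrite mul1n addn2 !expnS; ring.
Qed.

Lemma g_eq n x : (2 <= n)%N -> (x < n)%N ->
  g n x = ((minn (H (n + 1 + x - 2) - Wlt n (n + 1 + x)) (Ncount (n + 1 + x) n))%N)%:R / (Ncount (n + 1 + x) n)%:R.
Proof.
move=> hn hx; have hn0 : (0 < n)%N by lia.
rewrite /g /condP (chainE x (fun u => Iev u) hn0) (chainX x hn0).
rewrite block_count //; try lia.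
by rewrite invfM invrK mulrA mulrAC divfK // expf_neq0.
Qed.

Lemma Npos n x : (0 < n)%N -> (x < n)%N -> (0 < Ncount (n + 1 + x) n)%N.
Proof.
move=> hn hx; rewrite NcountE // muln_gt0 expn_gt0 /= bin_gt0; lia.
Qed.

Lemma chainX' n x : (0 < n)%N -> (x < n)%N ->
  chainP n (fun u => Xcnt u == x) = ('C(n.-1, x))%:R * (2 ^+ n.-1)^-1.
Proof.
move=> hn hx; rewrite chainX // NcountE // natrM natrX.
have -> : (n + 1 + x = n.-1 + (x + 2))%N by lia.
have key : forall a c p : rat, a != 0 -> a * c / (p * a) = c / p.
  by move=> a c p a0; rewrite [p * a]mulrC invfM mulrA [a * c]mulrC mulfK.
by rewrite (exprD _ n.-1 (x + 2)) key // expf_neq0.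
Qed.

Unset Implicit Arguments.
Theorem mainTheorem8 (n : nat) (hn : (2 <= n)%N) :
  (forall x : nat, (x < n)%N ->
     g n x = Num.min 1 (Num.max 0 (Vn n (n + 1 + x) / (Ncount (n + 1 + x) n)%:R)))
  /\ chainP n (fun u => Iev u)
     = \sum_(x < n) ('C(n.-1, x))%:R * (2 ^+ n.-1)^-1 * g n x.
Proof.
have hn0 : (0 < n)%N by lia.
have part1 : forall x : nat, (x < n)%N ->
     g n x = Num.min 1 (Num.max 0 (Vn n (n + 1 + x) / (Ncount (n + 1 + x) n)%:R)).
  move=> x hx; rewrite g_eq // VnE; last by lia.
  apply: clip; exact: Npos.
split => //.
have -> : chainP n (fun u => Iev u) = \sum_(x < n) chainP n (fun u => Iev u && (Xcnt u == x)).
  rewrite /chainP big_mkcond /= (eq_bigr (fun u : n.-tuple letter => \sum_(x < n) (if Iev u && (Xcnt u == x) then prob u else 0))).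
    rewrite exchange_big /=; apply: eq_bigr => x _; apply: esym; exact: big_mkcond.
  move=> u _; rewrite (bigD1 (Ordinal (Xcnt_lt u hn0))) //= eqxx andbT.
  rewrite big1 ?addr0 // => x hx; case: ifP => // /andP[_ /eqP h].
  by case/eqP: hx; apply: val_inj.
apply: eq_bigr => x _.
have hx := ltn_ord x.
rewrite -(chainX' hn0 hx) /g /condP /= mulrC divfK //.
rewrite (chainX x hn0) mulf_neq0 ?invr_neq0 ?expf_neq0 // pnatr_eq0 -lt0n; exact: Npos.
Qed.
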